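(* Let $H_1,H_2$ be separable Hilbert spaces, $K\in B(H_1)$, $L\in B(H_2)$, and let $\{x_n\oplus y_n\}_{n\geqslant1}$ be a $K\oplus L$-frame for $H_1\oplus H_2$ (so that $\{x_n\}$ is a $K$-frame for $H_1$ and $\{y_n\}$ an $L$-frame for $H_2$). Then: (i) if $\{x_n\}_{n\geqslant1}$ is $K$-minimal, then $L=0$; (ii) if $\{y_n\}_{n\geqslant1}$ is $L$-minimal, then $K=0$; (iii) if $\{x_n\}_{n\geqslant1}$ is $K$-minimal and $\{y_n\}_{n\geqslant1}$ is $L$-minimal, then $K=0$ and $L=0$. In particular, if $K\neq0$ and $L\neq0$, and $\{x_n\}_{n\geqslant1}$ is a $K$-minimal $K$-frame or $\{y_n\}_{n\geqslant1}$ is an $L$-minimal $L$-frame, then $\{x_n\oplus y_n\}_{n\geqslant1}$ is not a $K\oplus L$-frame for $H_1\oplus H_2$.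
   Context: $H_1\oplus H_2$ is the Hilbert space of pairs $x\oplus y$ with inner product $\langle x\oplus y,a\oplus b\rangle=\langle x,a\rangle+\langle y,b\rangle$; $(K\oplus L)(x\oplus y)=K(x)\oplus L(y)$. For a Hilbert space $H$ and $K\in B(H)$, $\{z_n\}_{n\geqslant1}$ is a $K$-frame if there are $A,B>0$ with $A\|K^*z\|^2\leq\sum_n|\langle z,z_n\rangle|^2\leq B\|z\|^2$ for all $z\in H$. Its synthesis operator is $T:\ell^2\to H$, $T(\{a_n\})=\sum_na_nz_n$. A $K$-frame is called $K$-minimal if its synthesis operator is injective. *)

(* Defs.v *)
From HB Require Import structures.
From mathcomp Require Import all_boot all_order all_algebra.
From mathcomp Require Import all_classical all_reals all_analysis.
From mathcomp Require Import complex.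

Set Implicit Arguments.
Unset Strict Implicit.
Unset Printing Implicit Defensive.

Import Order.TTheory GRing.Theory Num.Theory.
Local Open Scope ring_scope.

Section Hilbert.
Variable R : realType.
Local Notation C := (R[i]).

Definition cabs2 (c : C) : R := complex.Re c ^+ 2 + complex.Im c ^+ 2.

Variable V : lmodType C.
Implicit Types (ip : V -> V -> C).

Definition inner_product ip : Prop :=
  [/\ (forall (a : C) (u v w : V), ip (a *: u + v) w = a * ip u w + ip v w),
      (forall u v : V, ip v u = conjc (ip u v)),
      (forall u : V, 0 <= complex.Re (ip u u)) &
      (forall u : V, ip u u = 0 -> u = 0)].

Definition hnorm ip (u : V) : R := Num.sqrt (complex.Re (ip u u)).

Definition hconv ip (u : nat -> V) (l : V) : Prop :=
  forall e : R, 0 < e -> exists N : nat, forall n : nat, (N <= n)%N ->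
    hnorm ip (u n - l) < e.

Definition hcauchy ip (u : nat -> V) : Prop :=
  forall e : R, 0 < e -> exists N : nat, forall n m : nat,
    (N <= n)%N -> (N <= m)%N -> hnorm ip (u n - u m) < e.

Definition hilbert_space ip : Prop :=
  inner_product ip /\
  (forall u : nat -> V, hcauchy ip u -> exists l : V, hconv ip u l).

Definition separable ip : Prop :=
  exists s : nat -> V, forall (v : V) (e : R), 0 < e ->
    exists n : nat, hnorm ip (v - s n) < e.

Definition bounded_op ip (K : V -> V) : Prop :=
  (forall (a : C) (u v : V), K (a *: u + v) = a *: K u + K v) /\
  (exists M : R, forall u : V, hnorm ip (K u) <= M * hnorm ip u).

Definition adjoint ip (K Ks : V -> V) : Prop :=
  forall u v : V, ip (K u) v = ip u (Ks v).

Definition Kframe ip (K : V -> V) (z : nat -> V) : Prop :=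
  exists Ks : V -> V, adjoint ip K Ks /\
  exists A B : R, 0 < A /\ 0 < B /\
    forall v : V,
      ((A * hnorm ip (Ks v) ^+ 2)%:E <= \sum_(0 <= n <oo) (cabs2 (ip v (z n)))%:E)%E /\
      (\sum_(0 <= n <oo) (cabs2 (ip v (z n)))%:E <= (B * hnorm ip v ^+ 2)%:E)%E.

Definition in_l2 (a : nat -> C) : Prop :=
  (\sum_(0 <= n <oo) (cabs2 (a n))%:E < +oo)%E.

(* synthesis operator: T(a) = sum_n a_n z_n, i.e. the partial sums
   converge to v in the norm of H *)
Definition synthesis ip (z : nat -> V) (a : nat -> C) (v : V) : Prop :=
  hconv ip (fun N => \sum_(i < N) a i *: z i) v.

(* K-minimal: the synthesis operator l^2 -> H is injective *)
Definition Kminimal ip (z : nat -> V) : Prop :=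
  forall (a b : nat -> C) (v : V), in_l2 a -> in_l2 b ->
    synthesis ip z a v -> synthesis ip z b v -> a = b.

End Hilbert.

Definition ip_sum (R : realType) (V1 V2 : lmodType R[i])
  (ip1 : V1 -> V1 -> R[i]) (ip2 : V2 -> V2 -> R[i]) (p q : V1 * V2) : R[i] :=
  ip1 p.1 q.1 + ip2 p.2 q.2.

Definition op_sum (V1 V2 : Type) (K : V1 -> V1) (L : V2 -> V2)
  (p : V1 * V2) : V1 * V2 := (K p.1, L p.2).

(* Main.v *)
Require Import Defs.
From HB Require Import structures.
From mathcomp Require Import all_boot all_order all_algebra.
From mathcomp Require Import all_classical all_reals all_analysis.
From mathcomp Require Import complex.
Import Order.TTheory GRing.Theory Num.Theory.
Local Open Scope ring_scope.

From mathcomp Require Import ring lra.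


Section Ser.
Variable R : realType.
Implicit Types f : nat -> R.

Lemma ser_sup f : (forall n, 0 <= f n) ->
  (\sum_(0 <= n <oo) (f n)%:E = ereal_sup (range (fun N => (\sum_(i < N) f i)%:E)))%E.
Proof.
move=> f0.
have h : (forall n, (0 <= n)%N -> true -> (0 <= (f n)%:E)%E) by move=> n _ _; rewrite lee_fin.
rewrite (cvg_lim _ (ereal_nondecreasing_cvgn (ereal_nondecreasing_series h))) //.
congr ereal_sup; apply/seteqP; split => _ [N _ <-]; exists N => //;
  by rewrite big_mkord sumEFin.
Qed.

Lemma ser_le f M : (forall n, 0 <= f n) -> (forall N, \sum_(i < N) f i <= M) ->
  (\sum_(0 <= n <oo) (f n)%:E <= M%:E)%E.
Proof.
move=> f0 hM; rewrite ser_sup //; apply: ge_ereal_sup => _ [N _ <-].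
by rewrite lee_fin.
Qed.

Lemma ser_ge f N : (forall n, 0 <= f n) ->
  ((\sum_(i < N) f i)%:E <= \sum_(0 <= n <oo) (f n)%:E)%E.
Proof.
move=> f0; rewrite ser_sup //; apply: ereal_sup_ubound; by exists N.
Qed.

Lemma ser_adh f (x e : R) : (forall n, 0 <= f n) -> 0 < e ->
  (x%:E <= \sum_(0 <= n <oo) (f n)%:E)%E -> exists N, x - e < \sum_(i < N) f i.
Proof.
move=> f0 e0; rewrite ser_sup // => hx.
have : ((x - e)%:E < ereal_sup (range (fun N => (\sum_(i < N) f i)%:E)))%E.
  by apply: lt_le_trans hx; rewrite lte_fin ltrBlDr ltrDl.
by case/ereal_sup_gt => _ [N _ <-]; rewrite lte_fin => h; exists N.
Qed.
End Ser.


Section Cx.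
Context {R : realType}.
Local Notation C := (R[i]).
Implicit Types z w : C.

Lemma ReD z w : complex.Re (z + w) = complex.Re z + complex.Re w.
Proof. by case: z; case: w. Qed.
Lemma ImD z w : complex.Im (z + w) = complex.Im z + complex.Im w.
Proof. by case: z; case: w. Qed.
Lemma ReN z : complex.Re (- z) = - complex.Re z.
Proof. by case: z. Qed.
Lemma ImN z : complex.Im (- z) = - complex.Im z.
Proof. by case: z. Qed.
Lemma ReM z w : complex.Re (z * w) = complex.Re z * complex.Re w - complex.Im z * complex.Im w.
Proof. by case: z; case: w. Qed.
Lemma ImM z w : complex.Im (z * w) = complex.Re z * complex.Im w + complex.Im z * complex.Re w.
Proof. case: z => a b; case: w => c d /=. by rewrite addrC. Qed.
Lemma ReJ z : complex.Re (conjc z) = complex.Re z.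
Proof. by case: z. Qed.
Lemma ImJ z : complex.Im (conjc z) = - complex.Im z.
Proof. by case: z. Qed.
Lemma Re0 : complex.Re (0 : C) = 0. Proof. by []. Qed.
Lemma Im0 : complex.Im (0 : C) = 0. Proof. by []. Qed.
Lemma ReR (r : R) : complex.Re ((r%:C)%C : C) = r. Proof. by []. Qed.
Lemma ImR (r : R) : complex.Im ((r%:C)%C : C) = 0. Proof. by []. Qed.
Lemma ReB z w : complex.Re (z - w) = complex.Re z - complex.Re w.
Proof. by rewrite ReD ReN. Qed.
Lemma ImB z w : complex.Im (z - w) = complex.Im z - complex.Im w.
Proof. by rewrite ImD ImN. Qed.

Lemma cplx_eq z w : complex.Re z = complex.Re w -> complex.Im z = complex.Im w -> z = w.
Proof. by case: z; case: w => a b c d /= -> ->. Qed.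

Definition cRI := (ReD, ImD, ReB, ImB, ReN, ImN, ReM, ImM, ReJ, ImJ, Re0, Im0, ReR, ImR).

Lemma cabs2_ge0 z : 0 <= cabs2 z.
Proof. by rewrite /cabs2 addr_ge0 // sqr_ge0. Qed.

Lemma cabs2_0 : cabs2 (0 : C) = 0.
Proof. by rewrite /cabs2 /= expr0n /= addr0. Qed.

End Cx.


Section IP.
Context {R : realType}.
Local Notation C := (R[i]).
Context {V : lmodType C}.
Context {ip : V -> V -> C}.
Hypothesis hip : inner_product ip.

Lemma ip_lin a u v w : ip (a *: u + v) w = a * ip u w + ip v w.
Proof. by case: hip. Qed.
Lemma ip_sym u v : ip v u = conjc (ip u v).
Proof. by case: hip. Qed.

Lemma ip0l w : ip 0 w = 0.
Proof.
have := ip_lin 1 0 0 w; rewrite scaler0 addr0 mul1r => /eqP.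
by rewrite -subr_eq0 opprD addrA subrr sub0r oppr_eq0 => /eqP.
Qed.
Lemma ipDl u v w : ip (u + v) w = ip u w + ip v w.
Proof. by rewrite -[u in LHS]scale1r ip_lin mul1r. Qed.
Lemma ipZl a u w : ip (a *: u) w = a * ip u w.
Proof. by rewrite -[_ *: _]addr0 ip_lin ip0l addr0. Qed.
Lemma ipNl u w : ip (- u) w = - ip u w.
Proof. by rewrite -scaleN1r ipZl mulN1r. Qed.
Lemma ipBl u v w : ip (u - v) w = ip u w - ip v w.
Proof. by rewrite ipDl ipNl. Qed.
Lemma ip_suml N (a : nat -> C) (z : nat -> V) w :
  ip (\sum_(i < N) a i *: z i) w = \sum_(i < N) a i * ip (z i) w.
Proof.
elim: N => [|N IH]; first by rewrite !big_ord0 ip0l.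
by rewrite !big_ord_recr /= ipDl ipZl IH.
Qed.
Lemma ip0r w : ip w 0 = 0.
Proof. by rewrite ip_sym ip0l; apply: cplx_eq; rewrite /= ?oppr0. Qed.

Lemma ip_Im u : complex.Im (ip u u) = 0.
Proof.
have := ImJ (ip u u); rewrite -ip_sym => /eqP.
by rewrite -subr_eq0 opprK -mulr2n mulrn_eq0 /= => /eqP.
Qed.
Lemma ip_Re_ge0 u : 0 <= complex.Re (ip u u).
Proof. by case: hip. Qed.
Lemma ip_Re_eq0 u : complex.Re (ip u u) = 0 -> u = 0.
Proof.
move=> h; case: hip => _ _ _; apply; apply: cplx_eq; by rewrite ?h ?ip_Im.
Qed.

Lemma hnorm2 u : hnorm ip u ^+ 2 = complex.Re (ip u u).
Proof. by rewrite /hnorm sqr_sqrtr // ip_Re_ge0. Qed.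

End IP.


Section Pt.
Context {R : realType}.
Local Notation C := (R[i]).
Implicit Types p q : C.
Local Notation Re := complex.Re.
Local Notation Im := complex.Im.

Definition dotR p q := Re p * Re q + Im p * Im q.

Lemma cabs2E p : cabs2 p = Re p ^+ 2 + Im p ^+ 2. Proof. by []. Qed.

Lemma cabs2_par p q : cabs2 (p - q) + cabs2 (p + q) = 2 * cabs2 p + 2 * cabs2 q.
Proof. rewrite !cabs2E !cRI; ring. Qed.

Lemma cabs2N p : cabs2 (- p) = cabs2 p.
Proof. rewrite !cabs2E !cRI; ring. Qed.

Lemma cabs2_dbl p : cabs2 (p + p) = 4 * cabs2 p.
Proof. rewrite !cabs2E !cRI; ring. Qed.

Lemma cabs2_theta p q (t : R) : 0 < t ->
  cabs2 (p + q) <= (1 + t) * cabs2 p + (1 + t^-1) * cabs2 q.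
Proof.
move=> t0; set s := t^-1.
have ts : t * s = 1 by rewrite /s mulfV // gt_eqF.
have s0 : 0 < s by rewrite /s invr_gt0.
rewrite !cabs2E !cRI.
have h : 0 <= s * ((t * Re p - Re q) ^+ 2 + (t * Im p - Im q) ^+ 2).
  by apply: mulr_ge0; [lra| apply: addr_ge0; apply: sqr_ge0].
have e : s * ((t * Re p - Re q) ^+ 2 + (t * Im p - Im q) ^+ 2) =
   (t * s) * t * (Re p ^+2 + Im p ^+ 2) + s * (Re q ^+ 2 + Im q ^+ 2)
   - 2 * (t * s) * (Re p * Re q + Im p * Im q) by ring.
rewrite ts in e; nra.
Qed.

Lemma cabs2_sub_real p q (s : R) :
  cabs2 (p + (- (s%:C)%C) * q) = cabs2 p - 2 * s * dotR p q + s ^+ 2 * cabs2 q.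
Proof. rewrite !cabs2E /dotR !cRI; ring. Qed.

Lemma dotR_bound p q (B : R) : 0 < B ->
  - dotR p q <= (B * cabs2 p + B^-1 * cabs2 q) / 2.
Proof.
move=> B0; set s := B^-1.
have ts : B * s = 1 by rewrite /s mulfV // gt_eqF.
have s0 : 0 < s by rewrite /s invr_gt0.
rewrite !cabs2E /dotR.
have h : 0 <= s * ((B * Re p + Re q) ^+ 2 + (B * Im p + Im q) ^+ 2).
  by apply: mulr_ge0; [lra| apply: addr_ge0; apply: sqr_ge0].
have e : s * ((B * Re p + Re q) ^+ 2 + (B * Im p + Im q) ^+ 2) =
   (B * s) * B * (Re p ^+2 + Im p ^+ 2) + s * (Re q ^+ 2 + Im q ^+ 2)
   + 2 * (B * s) * (Re p * Re q + Im p * Im q) by ring.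
rewrite ts in e; nra.
Qed.

Lemma dotR_conj p q : dotR p q = Re (p * conjc q).
Proof. rewrite /dotR !cRI; ring. Qed.

Lemma Re_sum (I : Type) (r : seq I) (f : I -> C) :
  Re (\sum_(i <- r) f i) = \sum_(i <- r) Re (f i).
Proof.
elim: r => [|j r IH]; first by rewrite !big_nil.
by rewrite !big_cons ReD IH.
Qed.

Lemma Re_sq_le p : Re p ^+ 2 <= cabs2 p.
Proof. rewrite cabs2E; have := sqr_ge0 (Im p); lra. Qed.
Lemma Im_sq_le p : Im p ^+ 2 <= cabs2 p.
Proof. rewrite cabs2E; have := sqr_ge0 (Re p); lra. Qed.

Definition P (N : nat) (s : nat -> C) : R := \sum_(0 <= i < N) cabs2 (s i).

Lemma P_ge0 N s : 0 <= P N s.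
Proof. by rewrite /P; apply: sumr_ge0 => i _; apply: cabs2_ge0. Qed.

Lemma P_S N s : P N.+1 s = P N s + cabs2 (s N).
Proof. by rewrite /P big_nat_recr. Qed.

Lemma P_mono {N M} s : (N <= M)%N -> P N s <= P M s.
Proof.
move=> /subnK <-; elim: (M - N)%N => [|k IH]; first by rewrite add0n.
by rewrite addSn P_S; apply: le_trans IH _; rewrite lerDl cabs2_ge0.
Qed.

Lemma P_split {N M} s : (N <= M)%N -> P M s = P N s + \sum_(N <= i < M) cabs2 (s i).
Proof. by move=> NM; rewrite /P (big_cat_nat (leq0n N) NM). Qed.

Lemma P_ord N s : P N s = \sum_(i < N) cabs2 (s i).
Proof. by rewrite /P big_mkord. Qed.

End Pt.


Section Gen.
Context {R : realType}.
Local Notation C := (R[i]).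
Local Notation Re := complex.Re.
Local Notation Im := complex.Im.

Lemma small_inv (D e : R) : 0 <= D -> 0 < e ->
  exists k0, forall k, (k0 <= k)%N -> D / (k.+1)%:R < e.
Proof.
move=> D0 e0; have De : 0 <= D / e by rewrite divr_ge0 // ltW.
exists (Num.bound (D / e)) => k hk.
have h1 := archi_boundP De.
have h2 : ((Num.bound (D / e))%:R : R) <= (k.+1)%:R.
  by rewrite ler_nat; apply: leq_trans hk _.
have kp : 0 < (k.+1)%:R :> R by rewrite ltr0n.
rewrite ltr_pdivrMr // -ltr_pdivrMl // mulrC.
by apply: lt_le_trans h1 h2.
Qed.

Lemma le_of_inv (X Y D : R) : 0 <= D -> (forall k : nat, X <= Y + D / (k.+1)%:R) -> X <= Y.
Proof.
move=> D0 h; apply/ler_addgt0Pr => e e0.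
have [k0 hk] := small_inv D e D0 e0.
apply: le_trans (h k0) _; rewrite lerD2l ltW //; exact: hk.
Qed.

Lemma lim_rate (r e : nat -> R) :
  (forall j k, (k <= j)%N -> r k - e k <= r j /\ r j <= r k + e k) ->
  forall k, r k - e k <= sup (range (fun k => r k - e k)) /\
            sup (range (fun k => r k - e k)) <= r k + e k.
Proof.
move=> H.
have e0 : forall k, 0 <= e k.
  by move=> k; have [h _] := H k k (leqnn k); lra.
have ub : forall j k, r k - e k <= r j + e j.
  move=> j k; case: (leqP k j) => kj.
    by have [h _] := H j k kj; have := e0 j; lra.
  by have [_ h] := H k j (ltnW kj); have := e0 k; lra.
have hs : has_sup (range (fun k => r k - e k)).
  split; first by exists (r 0%N - e 0%N), 0%N.
  by exists (r 0%N + e 0%N) => _ [k _ <-]; apply: ub.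
move=> k; split.
  by apply: sup_upper_bound => //; exists k.
by apply: ge_sup; [case: hs | move=> _ [j _ <-]; apply: ub].
Qed.

Lemma P_theta M (p q : nat -> C) (t : R) : 0 < t ->
  P M (fun n => p n + q n) <= (1 + t) * P M p + (1 + t^-1) * P M q.
Proof.
move=> t0; elim: M => [|M IH]; first by rewrite /P !big_nil; lra.
rewrite !P_S; have := cabs2_theta (p M) (q M) t t0; lra.
Qed.

Lemma P_par M (p q m : nat -> C) : (forall n, m n + m n = p n + q n) ->
  P M (fun n => p n - q n) = 2 * P M p + 2 * P M q - 4 * P M m.
Proof.
move=> hm; elim: M => [|M IH]; first by rewrite /P !big_nil; ring.
rewrite !P_S IH.
have h1 := cabs2_par (p M) (q M); have h2 := cabs2_dbl (m M).
rewrite hm in h2; lra.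
Qed.

Lemma P_ext M (p q : nat -> C) : (forall n, p n = q n) -> P M p = P M q.
Proof. by move=> h; rewrite /P; apply: eq_bigr => i _; rewrite h. Qed.

Lemma P_le1 n M (p : nat -> C) : (n < M)%N -> cabs2 (p n) <= P M p.
Proof.
move=> nM; apply: le_trans (P_mono p nM); rewrite P_S.
by rewrite lerDr P_ge0.
Qed.

Lemma sq_le_abs (r y : R) : 0 <= y -> r ^+ 2 <= y ^+ 2 -> - y <= r /\ r <= y.
Proof. by move=> y0 h; split; nra. Qed.

End Gen.


Section Final.
Context {R : realType}.
Local Notation C := (R[i]).
Local Notation Re := complex.Re.
Context {V : lmodType C} {ip : V -> V -> C}.
Hypothesis hip : inner_product ip.
Variables (x : nat -> V) (B : R).
Hypothesis B0 : 0 < B.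
Hypothesis HB1 : forall u N, P N (fun n => ip u (x n)) <= B * Re (ip u u).
Variables (a : nat -> C) (d : R).
Hypothesis d0 : 0 < d.
Hypothesis HV : forall M, P M a <= d.
Hypothesis HW : forall u t e, 0 < e ->
  exists M, d - e < P M (fun n => a n + t * ip u (x n)).

Lemma P_expand K (f g : nat -> C) (s : R) :
  P K (fun n => f n + - (s%:C)%C * g n) =
  P K f - 2 * s * \sum_(0 <= i < K) dotR (f i) (g i) + s ^+ 2 * P K g.
Proof.
elim: K => [|K IH]; first by rewrite /P !big_nil; ring.
by rewrite !P_S IH big_nat_recr //= cabs2_sub_real; ring.
Qed.

Lemma rho_bound N :
  Re (ip (\sum_(i < N) a i *: x i) (\sum_(i < N) a i *: x i)) <= B * (d - P N a).
Proof.
set S := \sum_(i < N) a i *: x i; set rho := Re (ip S S).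
set phi := fun n => ip S (x n).
have rho0 : 0 <= rho by apply: ip_Re_ge0.
have Drho : \sum_(0 <= n < N) dotR (a n) (phi n) = rho.
  rewrite /rho {2}/S (ip_suml hip). rewrite Re_sum big_mkord; apply: eq_bigr => i _.
  by rewrite dotR_conj /phi -(ip_sym hip).
have key : forall s, 0 < s -> s * rho <= s * B * (d - P N a) + s ^+ 2 * B * rho.
  move=> s s0; apply/ler_addgt0Pr => e e0.
  have [M hM] := HW S (- (s%:C)%C) e e0.
  set M' := maxn M N.
  have h1 := P_mono (fun n => a n + - (s%:C)%C * ip S (x n)) (leq_maxl M N).
  rewrite -/M' [P M' _]P_expand in h1; rewrite -/phi in h1.
  have NM : (N <= M')%N by apply: leq_maxr.
  have hsplit : \sum_(0 <= i < M') dotR (a i) (ip S (x i)) =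
      rho + \sum_(N <= i < M') dotR (a i) (ip S (x i)).
    by rewrite (big_cat_nat (leq0n N) NM) /= -Drho.
  set tl := \sum_(N <= i < M') dotR (a i) (ip S (x i)) in hsplit.
  have htl : - tl <= (B * (P M' a - P N a) + B^-1 * P M' phi) / 2.
    rewrite /tl -sumrN (P_split a NM) addrAC subrr add0r.
    have hp : \sum_(N <= i < M') cabs2 (phi i) <= P M' phi.
      by rewrite (P_split phi NM) lerDr P_ge0.
    apply: (@le_trans _ _ ((B * \sum_(N <= i < M') cabs2 (a i) +
                            B^-1 * \sum_(N <= i < M') cabs2 (phi i)) / 2)).
      rewrite !mulr_sumr -big_split /= mulr_suml.
      by apply: ler_sum => i _; apply: dotR_bound.
    rewrite ler_pM2r ?invr_gt0 // lerD2l ler_wpM2l // ltW // invr_gt0 //.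
  have hphi : B^-1 * P M' phi <= rho.
    rewrite -(@ler_pM2l _ B) // mulrA mulfV ?gt_eqF // mul1r; exact: HB1.
  have hPa := HV M'.
  have hPphi : P M' phi <= B * rho by apply: HB1.
  have hsplit' : \sum_(0 <= i < M') dotR (a i) (phi i) = rho + tl by exact: hsplit.
  rewrite hsplit' in h1.
  have h2 : s * (- tl) <= s * ((B * (P M' a - P N a) + B^-1 * P M' phi) / 2).
    by rewrite ler_pM2l.
  have h3 : s * (B * P M' a) <= s * (B * d) by rewrite ler_pM2l // ler_pM2l.
  have h4 : s * (B^-1 * P M' phi) <= s * rho by rewrite ler_pM2l.
  have h5 : s ^+ 2 * P M' phi <= s ^+ 2 * (B * rho).
    by rewrite ler_pM2l // exprn_gt0.
  have hM' : P M (fun n => a n + - (s%:C)%C * ip S (x n)) = P M (fun n => a n + - (s%:C)%C * phi n) by [].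
  nra.
apply/ler_addgt0Pr => e e0.
set s := e / (B * rho + 1).
have Bp : 0 < B * rho + 1 by rewrite ltr_wpDl // mulr_ge0 // ltW.
have s0 : 0 < s by rewrite divr_gt0.
have hs : s * (B * rho + 1) = e by rewrite /s mulfVK // gt_eqF.
have := key s s0.
have k2 : s * rho <= s * (B * (d - P N a) + s * B * rho) -> rho <= B * (d - P N a) + s * B * rho.
  by rewrite ler_pM2l.
move=> hk.
have k3 : s * rho <= s * (B * (d - P N a) + s * B * rho).
  by rewrite mulrDr; nra.
have := k2 k3.
nra.
Qed.


Lemma P_zero M : P M (fun _ => (0 : C)) = 0.
Proof. by rewrite /P big1 // => i _; rewrite cabs2_0. Qed.

Lemma P_t0 M u : P M (fun n => a n + 0 * ip u (x n)) = P M a.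
Proof. by rewrite /P; apply: eq_bigr => i _; rewrite mul0r addr0. Qed.

Lemma core_false : Kminimal ip x -> False.
Proof.
move=> Km.
have l2a : in_l2 a.
  rewrite /in_l2; apply: (le_lt_trans (@ser_le _ _ d _ _)) => //.
    by move=> n; apply: cabs2_ge0.
  by move=> N; rewrite -P_ord.
  exact: ltry.
have l20 : in_l2 (fun _ => (0 : C)).
  rewrite /in_l2; apply: (le_lt_trans (@ser_le _ _ 0 _ _)) => //.
    by move=> n; apply: cabs2_ge0.
  by move=> N; rewrite big1 // => i _; rewrite cabs2_0.
  exact: ltry.
have s0 : synthesis ip x (fun _ => 0) 0.
  move=> e e0; exists 0%N => n _.
  rewrite (eq_bigr (fun _ => 0)); last by move=> i _; rewrite scale0r.
  by rewrite big1 // subrr /hnorm ip0l // sqrtr0.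
have sa : synthesis ip x a 0.
  move=> e e0.
  have eB : 0 < e ^+ 2 / B by rewrite divr_gt0 // exprn_gt0.
  have [M hM] := HW 0 0 _ eB; rewrite P_t0 in hM.
  exists M => N MN; rewrite subr0.
  have h1 := rho_bound N.
  have h2 := P_mono a MN.
  have h3 : B * (d - P N a) < e ^+ 2.
    rewrite -(@ltr_pM2l _ B^-1) ?invr_gt0 // mulrA mulVf ?gt_eqF // mul1r mulrC.
    lra.
  have hn := hnorm2 hip (\sum_(i < N) a i *: x i).
  have hn0 : 0 <= hnorm ip (\sum_(i < N) a i *: x i) by apply: sqrtr_ge0.
  nra.
have := Km a (fun _ => 0) 0 l2a l20 sa s0 => a0.
have [M hM] := HW 0 0 _ d0; rewrite P_t0 a0 P_zero in hM.
by rewrite subrr ltxx in hM.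
Qed.

End Final.


Section Constr.
Context {R : realType}.
Local Notation C := (R[i]).
Local Notation Re := complex.Re.
Local Notation Im := complex.Im.
Context {V : lmodType C} {ip : V -> V -> C}.
Hypothesis hip : inner_product ip.
Variables (x : nat -> V) (b : nat -> C) (delta : R).
Hypothesis delta0 : 0 < delta.
Let c (u : V) := fun n => ip u (x n) + b n.
Hypothesis HB2 : forall u, exists M, forall N, P N (c u) <= M.
Hypothesis HL : forall u e, 0 < e -> exists N, delta - e < P N (c u).

Let F u := sup (range (fun N => P N (c u))).

Let hsF u : has_sup (range (fun N => P N (c u))).
Proof.
split; first by exists (P 0 (c u)), 0%N.
by have [M hM] := HB2 u; exists M => _ [N _ <-].
Qed.

Let F_ub u N : P N (c u) <= F u.
Proof. by apply: sup_upper_bound (hsF u) _ _; exists N. Qed.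

Let F_adh u e : 0 < e -> exists N, F u - e < P N (c u).
Proof. by move=> e0; have [_ [N _ <-] h] := sup_adherent e0 (hsF u); exists N. Qed.

Let F_ge u : delta <= F u.
Proof.
apply/ler_addgt0Pr => e e0; have [N hN] := HL u e e0.
by have := F_ub u N; lra.
Qed.

Let d := inf (range F).

Let hiF : has_inf (range F).
Proof.
split; first by exists (F 0), 0.
by exists delta => _ [u _ <-]; apply: F_ge.
Qed.

Let d_lb u : d <= F u.
Proof. by apply: ge_inf; [case: hiF | exists u]. Qed.

Let d_ge : delta <= d.
Proof. by apply: lb_le_inf; [exists (F 0), 0 | move=> _ [u _ <-]; apply: F_ge]. Qed.

Let e2 (k : nat) : R := ((k.+1)%:R ^+ 2)^-1.

Let e2_gt0 k : 0 < e2 k.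
Proof. by rewrite /e2 invr_gt0 exprn_gt0 // ltr0n. Qed.

Let hseq k : exists u, F u < d + e2 k.
Proof.
have [_ [u _ <-] h] := inf_adherent (e2_gt0 k) hiF; by exists u.
Qed.

Let uk k := projT1 (cid (hseq k)).
Let uk_spec k : F (uk k) < d + e2 k.
Proof. exact: projT2 (cid (hseq k)). Qed.
Let ck k := c (uk k).

Lemma cauchy_ck N j k : P N (fun n => ck j n - ck k n) <= 2 * e2 j + 2 * e2 k.
Proof.
apply/ler_addgt0Pr => e e0.
set m := (2^-1 : C) *: (uk j + uk k).
have hm : forall n, c m n + c m n = ck j n + ck k n.
  move=> n; rewrite /c /ck /m (ipZl hip) (ipDl hip).
  rewrite [LHS]addrACA -mulrDl.
  have h2 : (2^-1 + 2^-1 : C) = 1.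
    by field.
  by rewrite h2 mul1r addrACA.
have e4 : 0 < e / 4 by rewrite divr_gt0.
have [M hM] := F_adh m (e / 4) e4.
set M' := maxn M N.
have h1 := P_mono (fun n => ck j n - ck k n) (leq_maxr M N).
have h2 := P_mono (c m) (leq_maxl M N).
rewrite -/M' (P_par M' (ck j) (ck k) (c m) hm) in h1.
have h3 := F_ub (uk j) M'; have h4 := F_ub (uk k) M'.
have h5 := uk_spec j; have h6 := uk_spec k; have h7 := d_lb m.
rewrite -/M' in h2.
rewrite /ck in h1; lra.
Qed.


Let e1 (k : nat) : R := 2 / (k.+1)%:R.
Let e1_ge0 k : 0 <= e1 k.
Proof. by rewrite /e1 divr_ge0 // ler0n. Qed.
Let e1_sq k : e1 k ^+ 2 = 4 * e2 k.
Proof. rewrite /e1 /e2; field; rewrite gt_eqF //; have := ler0n R k; lra. Qed.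
Let e2_mono j k : (k <= j)%N -> e2 j <= e2 k.
Proof.
move=> kj; rewrite /e2 lef_pV2 ?posrE ?exprn_gt0 ?ltr0n //.
by rewrite ler_pXn2r ?nnegrE ?ler0n // ler_nat.
Qed.

Let coord n j k : (k <= j)%N ->
  (Re (ck j n) - Re (ck k n)) ^+ 2 <= e1 k ^+ 2 /\ (Im (ck j n) - Im (ck k n)) ^+ 2 <= e1 k ^+ 2.
Proof.
move=> kj; have h := P_le1 n n.+1 (fun n => ck j n - ck k n) (ltnSn n).
have h1 := cauchy_ck n.+1 j k; have h2 := e2_mono j k kj.
have h3 := Re_sq_le (ck j n - ck k n); have h4 := Im_sq_le (ck j n - ck k n).
rewrite ReB in h3; rewrite ImB in h4; rewrite e1_sq; split; lra.
Qed.

Let ar n := sup (range (fun k => Re (ck k n) - e1 k)).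
Let ai n := sup (range (fun k => Im (ck k n) - e1 k)).
Let a n : C := Complex (ar n) (ai n).

Let a_close n k : cabs2 (a n - ck k n) <= 8 * e2 k.
Proof.
have hr := @lim_rate R (fun k => Re (ck k n)) e1.
have hi := @lim_rate R (fun k => Im (ck k n)) e1.
have [r1 r2] : Re (ck k n) - e1 k <= ar n /\ ar n <= Re (ck k n) + e1 k.
  apply: hr => j k' kj; have [h _] := coord n j k' kj.
  have [l1 l2] := sq_le_abs _ _ (e1_ge0 k') h; split; lra.
have [i1 i2] : Im (ck k n) - e1 k <= ai n /\ ai n <= Im (ck k n) + e1 k.
  apply: hi => j k' kj; have [_ h] := coord n j k' kj.
  have [l1 l2] := sq_le_abs _ _ (e1_ge0 k') h; split; lra.
rewrite cabs2E ReB ImB /=.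
have -> : 8 * e2 k = e1 k ^+ 2 + e1 k ^+ 2 by rewrite e1_sq; ring.
have h0 := e1_ge0 k.
apply: lerD; nra.
Qed.

Let P_unif N (p : nat -> C) (D : R) : (forall n, cabs2 (p n) <= D) -> P N p <= N%:R * D.
Proof.
move=> h; elim: N => [|N IH]; first by rewrite /P big_nil mul0r.
by rewrite P_S -natr1 mulrDl mul1r; apply: lerD.
Qed.

Let e2_inv k : e2 k <= (k.+1)%:R^-1.
Proof.
rewrite /e2 lef_pV2 ?posrE ?exprn_gt0 ?ltr0n // expr2 ler_peMl ?ltr0n //.
by rewrite ler1n.
Qed.

Let E_close N k : P N (fun n => a n - ck k n) <= 4 * e2 k.
Proof.
apply/ler_addgt0Pr => e e0.
have D0 : 0 <= 16 * N%:R + 4 :> R by rewrite addr_ge0 // mulr_ge0 // ler0n.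
have [k0 hk0] := small_inv _ _ D0 e0.
set j := maxn k k0.
have hj := hk0 j (leq_maxr k k0).
have hj2 := e2_inv j.
have h1 := P_theta N (fun n => a n - ck j n) (fun n => ck j n - ck k n) 1 ltr01.
rewrite invr1 in h1.
have h2 : P N (fun n => a n - ck k n) =
          P N (fun n => (a n - ck j n) + (ck j n - ck k n)).
  by apply: P_ext => n; rewrite addrA subrK.
have h3 := P_unif N (fun n => a n - ck j n) (8 * e2 j) (fun n => a_close n j).
have h4 := cauchy_ck N j k.
have h5 : (16 * N%:R + 4) * e2 j <= e.
  apply: le_trans (ltW hj); rewrite ler_wpM2l //.
have N0 : 0 <= N%:R :> R by rewrite ler0n.
rewrite h2; nra.
Qed.

Let hval (k : nat) : R := (k.+1)%:R^-1.
Let hval_pos k : 0 < hval k.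
Proof. by rewrite /hval invr_gt0 ltr0n. Qed.
Let hval_le1 k : hval k <= 1.
Proof. by rewrite /hval invf_le1 ?ltr0n // ler1n. Qed.
Let e2_hval k : e2 k = hval k ^+ 2.
Proof. by rewrite /e2 /hval exprVn. Qed.
Let hval_inv k : (hval k)^-1 * hval k = 1.
Proof. by rewrite mulVf // gt_eqF // hval_pos. Qed.

Lemma constr_V M : P M a <= d.
Proof.
have D0 : 0 <= d + 10.
  by apply: addr_ge0 => //; apply: le_trans (ltW delta0) d_ge.
apply: (le_of_inv _ _ _ D0) => k.
set h := hval k.
have h0 := hval_pos k; have h1 := hval_le1 k; have hi := hval_inv k.
have t1 := P_theta M (ck k) (fun n => a n - ck k n) h h0.
have t2 : P M a = P M (fun n => ck k n + (a n - ck k n)).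
  by apply: P_ext => n; rewrite addrC subrK.
have t3 := F_ub (uk k) M; have t4 := uk_spec k.
have t5 := E_close M k.
rewrite e2_hval -/h in t4 t5.
have t6 : (1 + h^-1) * P M (fun n => a n - ck k n) <= 4 * h ^+ 2 + 4 * h.
  have hp : 0 <= 1 + h^-1 by rewrite addr_ge0 // invr_ge0 ltW.
  apply: le_trans (ler_wpM2l hp t5) _.
  have -> : (1 + h^-1) * (4 * h ^+ 2) = 4 * h ^+ 2 + 4 * (h^-1 * h) * h by ring.
  by rewrite hi mulr1.
have t7 : (1 + h) * P M (ck k) <= (1 + h) * (d + h ^+ 2).
  by rewrite ler_wpM2l ?addr_ge0 // ltW // (le_lt_trans t3 t4).
rewrite t2 /=; have := d_ge.
have -> : (d + 10) / (k.+1)%:R = (d + 10) * h by [].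
rewrite -/h in h0 h1 hi.
have hh2 : h ^+ 2 <= h by rewrite expr2 ger_pMl.
have hh3 : h * h ^+ 2 <= h by nra.
nra.
Qed.

Lemma constr_W u (t : C) e : 0 < e ->
  exists M, d - e < P M (fun n => a n + t * ip u (x n)).
Proof.
move=> e0.
have D0 : 0 <= d + 8.
  by apply: addr_ge0 => //; apply: le_trans (ltW delta0) d_ge.
have e20 : 0 < e / 2 by rewrite divr_gt0.
have [k hk] := small_inv _ _ D0 e20.
have hk' := hk k (leqnn k).
set h := hval k.
have h0 := hval_pos k; have h1 := hval_le1 k; have hi := hval_inv k.
set m := uk k + t *: u.
have cm : forall n, c m n = (a n + t * ip u (x n)) + (ck k n - a n).
  move=> n; rewrite /c /ck /m (ipDl hip) (ipZl hip).
  rewrite /c; ring.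
have [M hM] := F_adh m (e / 2) e20.
exists M.
have t1 := P_theta M (fun n => a n + t * ip u (x n)) (fun n => ck k n - a n) h h0.
rewrite -(P_ext M _ _ cm) in t1.
have t5 : P M (fun n => ck k n - a n) <= 4 * h ^+ 2.
  have -> : P M (fun n => ck k n - a n) = P M (fun n => a n - ck k n).
    by rewrite /P; apply: eq_bigr => n _; rewrite -opprB cabs2N.
  by rewrite -e2_hval; apply: E_close.
have t6 : (1 + h^-1) * P M (fun n => ck k n - a n) <= 4 * h ^+ 2 + 4 * h.
  have hp : 0 <= 1 + h^-1 by rewrite addr_ge0 // invr_ge0 ltW.
  apply: le_trans (ler_wpM2l hp t5) _.
  have -> : (1 + h^-1) * (4 * h ^+ 2) = 4 * h ^+ 2 + 4 * (h^-1 * h) * h by ring.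
  by rewrite hi mulr1.
have t7 := d_lb m.
have hk2 : (d + 8) * h < e / 2 by exact: hk'.
rewrite -/h in h0 h1 hi.
have dg := d_ge.
set X := P M _.
rewrite ltNge; apply/negP => hX.
have t8 : (1 + h) * X <= (1 + h) * (d - e) by rewrite ler_wpM2l // addr_ge0 // ltW.
have t9 : 0 <= h * e by rewrite mulr_ge0 // ltW.
rewrite -/X in t1.
have hh2 : h ^+ 2 <= h by rewrite expr2 ger_pMl.
nra.
Qed.

Lemma constr : exists (a : nat -> C) (d : R), 0 < d /\ (forall M, P M a <= d) /\
  (forall u t e, 0 < e -> exists M, d - e < P M (fun n => a n + t * ip u (x n))).
Proof.
exists a, d; split; first by apply: lt_le_trans delta0 d_ge.
split; [exact: constr_V | exact: constr_W].
Qed.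

End Constr.


Section Main.
Context {R : realType}.
Local Notation C := (R[i]).
Local Notation Re := complex.Re.
Local Notation Im := complex.Im.

Lemma lin0 {V : lmodType C} {K : V -> V} :
  (forall (a : C) (u v : V), K (a *: u + v) = a *: K u + K v) -> K 0 = 0.
Proof.
move=> linK; have := linK 1 0 0; rewrite scaler0 addr0 scale1r => /eqP.
by rewrite -subr_eq0 opprD addrA subrr sub0r oppr_eq0 => /eqP.
Qed.

Lemma hn_sum (V1 V2 : lmodType C) (ip1 : V1 -> V1 -> C) (ip2 : V2 -> V2 -> C)
  (h1 : inner_product ip1) (h2 : inner_product ip2) (p : V1 * V2) :
  hnorm (ip_sum ip1 ip2) p ^+ 2 = Re (ip1 p.1 p.1) + Re (ip2 p.2 p.2).
Proof.
rewrite /hnorm sqr_sqrtr /ip_sum ReD //.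
by apply: addr_ge0; apply: ip_Re_ge0.
Qed.

Lemma main_i (V1 V2 : lmodType C) (ip1 : V1 -> V1 -> C) (ip2 : V2 -> V2 -> C)
  (K : V1 -> V1) (L : V2 -> V2) (x : nat -> V1) (y : nat -> V2) :
  inner_product ip1 -> inner_product ip2 ->
  (forall (a : C) (u v : V1), K (a *: u + v) = a *: K u + K v) ->
  Kframe (ip_sum ip1 ip2) (op_sum K L) (fun n => (x n, y n)) ->
  Kminimal ip1 x -> L = (fun _ => 0).
Proof.
move=> h1 h2 linK [Ks [adj [A [B [A0 [B0 hfr]]]]]] Km.
apply: boolp.funext => q0; case: (eqVneq (L q0) 0) => // Lq0; exfalso.
set w := L q0.
have K0 := lin0 linK.
have key : forall (p : V1 * V2) q2, ip2 q2 (Ks p).2 = ip2 (L q2) p.2.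
  move=> p q2; have := adj (0, q2) p.
  by rewrite /ip_sum /op_sum /= K0 !(ip0l h1) !add0r => ->.
set z2 := (Ks (0, w)).2.
have zind : forall u, (Ks (u, w)).2 = z2.
  move=> u; apply/eqP; rewrite -subr_eq0; apply/eqP.
  set v := (Ks (u, w)).2 - z2.
  apply: (ip_Re_eq0 h2); rewrite /v (ipBl h2) (ip_sym h2) -/v.
  rewrite [ip2 z2 v](ip_sym h2) key /z2 key /= subrr.
  by [].
have z20 : z2 != 0.
  apply/eqP => z0; move: Lq0; rewrite -/w => /eqP; apply.
  apply: (ip_Re_eq0 h2); have := key (0, w) q0; rewrite -/z2 z0 (ip0r h2) /= -/w.
  by move=> <-.
set kappa := Re (ip2 z2 z2).
have kap0 : 0 < kappa.
  rewrite lt_neqAle (ip_Re_ge0 h2) andbT eq_sym; apply/eqP => k0.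
  by move: z20; rewrite (ip_Re_eq0 h2 _ k0) eqxx.
set delta := A * kappa.
have delta0 : 0 < delta by rewrite mulr_gt0.
set b := fun n => ip2 w (y n).
have HB2 : forall u, exists M, forall N, P N (fun n => ip1 u (x n) + b n) <= M.
  move=> u; exists (B * hnorm (ip_sum ip1 ip2) (u, w) ^+ 2) => N.
  have [_ up] := hfr (u, w).
  have := le_trans (ser_ge _ (fun n => cabs2 (ip_sum ip1 ip2 (u, w) (x n, y n))) N
                     (fun n => cabs2_ge0 _)) up.
  by rewrite lee_fin P_ord.
have HL : forall u e, 0 < e -> exists N, delta - e < P N (fun n => ip1 u (x n) + b n).
  move=> u e e0; have [lo _] := hfr (u, w).
  have [N hN] := ser_adh _ _ _ _ (fun n => cabs2_ge0 _) e0 lo.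
  exists N; rewrite P_ord; apply: le_lt_trans hN; rewrite lerD2r.
  rewrite hn_sum // zind -/kappa /delta ler_pM2l //; have := ip_Re_ge0 h1 (Ks (u, w)).1; lra.
have HB1 : forall u N, P N (fun n => ip1 u (x n)) <= B * Re (ip1 u u).
  move=> u N; have [_ up] := hfr (u, 0).
  have := le_trans (ser_ge _ (fun n => cabs2 (ip_sum ip1 ip2 (u, 0) (x n, y n))) N
                     (fun n => cabs2_ge0 _)) up.
  rewrite lee_fin hn_sum //= (ip0l h2) Re0 addr0 P_ord.
  by under eq_bigr do rewrite /ip_sum /= (ip0l h2) addr0.
have [a [d [d0 [HV HW]]]] := constr h1 x b delta delta0 HB2 HL.
exact: (core_false h1 x B B0 HB1 a d d0 HV HW Km).
Qed.

End Main.


Lemma frame_swap (R : realType) (V1 V2 : lmodType R[i])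
  (ip1 : V1 -> V1 -> R[i]) (ip2 : V2 -> V2 -> R[i])
  (K : V1 -> V1) (L : V2 -> V2) (x : nat -> V1) (y : nat -> V2) :
  Kframe (ip_sum ip1 ip2) (op_sum K L) (fun n => (x n, y n)) ->
  Kframe (ip_sum ip2 ip1) (op_sum L K) (fun n => (y n, x n)).
Proof.
move=> [Ks [adj [A [B [A0 [B0 hfr]]]]]].
pose sw (p : V2 * V1) : V1 * V2 := (p.2, p.1).
exists (fun p : V2 * V1 => ((Ks (sw p)).2, (Ks (sw p)).1)); split.
  move=> u v; have := adj (sw u) (sw v).
  by rewrite /ip_sum /op_sum /= => e; rewrite addrC e addrC.
exists A, B; split => //; split => // v.
have [lo up] := hfr (sw v).
have hn1 : hnorm (ip_sum ip2 ip1) v = hnorm (ip_sum ip1 ip2) (sw v).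
  by rewrite /hnorm /ip_sum /= addrC.
have hn2 : hnorm (ip_sum ip2 ip1) ((Ks (sw v)).2, (Ks (sw v)).1) =
           hnorm (ip_sum ip1 ip2) (Ks (sw v)).
  by rewrite /hnorm /ip_sum /= addrC.
have ser : (\sum_(0 <= n <oo) (cabs2 (ip_sum ip2 ip1 v (y n, x n)))%:E =
            \sum_(0 <= n <oo) (cabs2 (ip_sum ip1 ip2 (sw v) (x n, y n)))%:E)%E.
  by apply: eq_eseriesr => n _; rewrite /ip_sum /= addrC.
by rewrite hn1 hn2 ser.
Qed.

Theorem corollary2p13 (R : realType) (V1 V2 : lmodType R[i])
  (ip1 : V1 -> V1 -> R[i]) (ip2 : V2 -> V2 -> R[i])
  (K : V1 -> V1) (L : V2 -> V2) (x : nat -> V1) (y : nat -> V2) :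
  hilbert_space ip1 -> separable ip1 ->
  hilbert_space ip2 -> separable ip2 ->
  bounded_op ip1 K -> bounded_op ip2 L ->
  (Kframe (ip_sum ip1 ip2) (op_sum K L) (fun n => (x n, y n)) ->
     [/\ (Kminimal ip1 x -> L = (fun _ => 0)),
         (Kminimal ip2 y -> K = (fun _ => 0)) &
         (Kminimal ip1 x -> Kminimal ip2 y ->
            K = (fun _ => 0) /\ L = (fun _ => 0))]) /\
  (K <> (fun _ => 0) -> L <> (fun _ => 0) ->
     ((Kframe ip1 K x /\ Kminimal ip1 x) \/ (Kframe ip2 L y /\ Kminimal ip2 y)) ->
     ~ Kframe (ip_sum ip1 ip2) (op_sum K L) (fun n => (x n, y n))).
Proof.
move=> [h1 _] _ [h2 _] _ [linK _] [linL _].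
have Pi := fun fr => main_i V1 V2 ip1 ip2 K L x y h1 h2 linK fr.
have Pii := fun fr => main_i V2 V1 ip2 ip1 L K y x h2 h1 linL
                        (frame_swap _ _ _ _ _ _ _ _ _ fr).
split.
  move=> fr; split; [exact: Pi fr | exact: Pii fr |].
  by move=> m1 m2; split; [exact: Pii fr m2 | exact: Pi fr m1].
move=> Kn Ln [[_ m1] | [_ m2]] fr.
  by apply: Ln; exact: Pi fr m1.
by apply: Kn; exact: Pii fr m2.
Qed.
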